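(* Read's space $\mathcal R=(c_0,|||\cdot|||)$ is weakly locally uniformly rotund: for every $x$ with $|||x|||=1$ and every sequence $(x_n)$ with $|||x_n|||=1$ and $|||x+x_n|||\to 2$, the sequence $(x_n)$ converges weakly to $x$.
   Context: Let $c_{00}(\mathbb Q)$ be the set of finitely supported sequences with rational coefficients, and let $(u_n)_{n\in\mathbb N}$ be a sequence in $c_{00}(\mathbb Q)$ which lists every element of $c_{00}(\mathbb Q)$ infinitely many times. Let $(a_n)_{n\in\mathbb N}$ be a strictly increasing sequence of positive integers with $a_n>\max\operatorname{supp} u_n$ and $a_n>\|u_n\|_1$ for every $n$. $(e_n)$ denotes the canonical unit vectors and $\langle x,y\rangle=\sum_n x_ny_n$. Read's norm on $c_0$ is $|||x||| = \|x\|_\infty + \sum_{n} 2^{-a_n^2}|\langle x, u_n - e_{a_n}\rangle|$, and Read's space is $\mathcal R=(c_0,|||\cdot|||)$ (real scalars). *)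

(* Defs.v *)
From Stdlib Require Import Reals QArith.
From Coquelicot Require Import Coquelicot.
Open Scope R_scope.

Definition seqR := nat -> R.

Definition in_c0 (x : seqR) : Prop := is_lim_seq x 0.

Definition in_c00Q (v : seqR) : Prop :=
  (exists N : nat, forall k, (N <= k)%nat -> v k = 0) /\
  (forall k, exists q : Q, v k = Q2R q).

Definition unit_vec (m : nat) : seqR := fun k => if Nat.eqb k m then 1 else 0.

Definition inner (x y : seqR) : R := Series (fun k => x k * y k).

Definition sup_norm (x : seqR) : R :=
  real (Lub_Rbar (fun r => exists k, r = Rabs (x k))).

Definition l1_norm (v : seqR) : R := Series (fun k => Rabs (v k)).

Definition seq_add (x y : seqR) : seqR := fun k => x k + y k.
Definition seq_scal (c : R) (x : seqR) : seqR := fun k => c * x k.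
Definition seq_sub (x y : seqR) : seqR := fun k => x k - y k.

Definition read_norm (u : nat -> seqR) (a : nat -> nat) (x : seqR) : R :=
  sup_norm x +
  Series (fun n => / 2 ^ (a n * a n) *
                   Rabs (inner x (seq_sub (u n) (unit_vec (a n))))).

Definition read_data (u : nat -> seqR) (a : nat -> nat) : Prop :=
  (forall n, in_c00Q (u n)) /\
  (forall v, in_c00Q v -> forall N, exists n, (N <= n)%nat /\ u n = v) /\
  (forall n, (0 < a n)%nat) /\
  (forall n, (a n < a (S n))%nat) /\
  (forall n k, u n k <> 0 -> (k < a n)%nat) /\
  (forall n, l1_norm (u n) < INR (a n)).

Definition bounded_linear_functional (u : nat -> seqR) (a : nat -> nat)
  (f : seqR -> R) : Prop :=
  (forall y z, in_c0 y -> in_c0 z -> f (seq_add y z) = f y + f z) /\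
  (forall c y, in_c0 y -> f (seq_scal c y) = c * f y) /\
  (exists C : R, forall y, in_c0 y -> Rabs (f y) <= C * read_norm u a y).

Definition weak_conv (u : nat -> seqR) (a : nat -> nat)
  (xs : nat -> seqR) (x : seqR) : Prop :=
  forall f, bounded_linear_functional u a f ->
    is_lim_seq (fun n => f (xs n)) (f x).

(* Main.v *)
Require Import Defs.
From Stdlib Require Import Reals QArith Qreals Lra Lia FunctionalExtensionality ClassicalEpsilon Classical.
From Coquelicot Require Import Coquelicot.
Open Scope R_scope.

Lemma lim_eps (u : nat -> R) (l : R) : is_lim_seq u l <->
  forall eps, 0 < eps -> exists N, forall n, (N <= n)%nat -> Rabs (u n - l) < eps.
Proof.
  rewrite is_lim_seq_Reals. unfold Un_cv, Rdist. split; intros H e He;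
  destruct (H e He) as [N HN]; exists N; intros n Hn; apply HN; lia.
Qed.

Lemma sum_stable (a : nat -> R) N : (forall k, (N < k)%nat -> a k = 0) ->
  forall d, sum_f_R0 a (N + d) = sum_f_R0 a N.
Proof.
  intros H d; induction d.
  - now rewrite Nat.add_0_r.
  - replace (N + S d)%nat with (S (N + d)) by lia. rewrite tech5, IHd, H by lia. ring.
Qed.

Lemma fin_series (a : nat -> R) N : (forall k, (N < k)%nat -> a k = 0) ->
  is_series a (sum_f_R0 a N).
Proof.
  intros H. rewrite is_series_Reals. intros e He. exists N. intros n Hn.
  replace n with (N + (n - N))%nat by lia. rewrite sum_stable by auto.
  unfold Rdist. rewrite Rminus_diag, Rabs_R0. lra.
Qed.

Lemma Series_fin (a : nat -> R) N : (forall k, (N < k)%nat -> a k = 0) ->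
  Series a = sum_f_R0 a N /\ ex_series a.
Proof.
  intros H. pose proof (fin_series a N H). split.
  - now apply is_series_unique.
  - eexists; eauto.
Qed.

Lemma lim_sum (g : nat -> nat -> R) (h : nat -> R) M :
  (forall m, is_lim_seq (fun n => g n m) (h m)) ->
  is_lim_seq (fun n => sum_f_R0 (g n) M) (sum_f_R0 h M).
Proof.
  intros H. induction M; simpl.
  - apply H.
  - apply is_lim_seq_plus'; auto.
Qed.

Lemma tail_bound (b c : nat -> R) M : ex_series b -> (forall m, Rabs (c m) <= b m) ->
  ex_series c /\ Rabs (Series c - sum_f_R0 c M) <= Series b - sum_f_R0 b M.
Proof.
  intros Hb Hc.
  assert (Ec : ex_series c) by (apply (ex_series_le c b); auto).
  split; auto.
  rewrite (Series_incr_n c (S M)) by (auto; lia).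
  rewrite (Series_incr_n b (S M)) by (auto; lia). simpl pred.
  replace (sum_f_R0 c M + Series (fun k => c (S M + k)%nat) - sum_f_R0 c M)
    with (Series (fun k => c (S M + k)%nat)) by ring.
  replace (sum_f_R0 b M + Series (fun k => b (S M + k)%nat) - sum_f_R0 b M)
    with (Series (fun k => b (S M + k)%nat)) by ring.
  assert (Eb : ex_series (fun k => b (S M + k)%nat)) by (apply ex_series_incr_n; auto).
  eapply Rle_trans. apply Series_Rabs.
  - apply (@ex_series_le R_AbsRing R_CompleteNormedModule _ (fun k => b (S M + k)%nat)); auto.
    intros n. unfold norm; simpl. unfold abs; simpl. rewrite Rabs_Rabsolu. apply Hc.
  - apply Series_le; auto. intros n; split; [apply Rabs_pos | apply Hc].
Qed.

Lemma dom_series (g : nat -> nat -> R) (h b : nat -> R) : ex_series b ->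
  (forall n m, Rabs (g n m) <= b m) ->
  (forall m, is_lim_seq (fun n => g n m) (h m)) ->
  is_lim_seq (fun n => Series (g n)) (Series h).
Proof.
  intros Hb Hg Hl.
  assert (Hh : forall m, Rabs (h m) <= b m).
  { intros m. assert (L := is_lim_seq_abs _ _ (Hl m)).
    assert (Rbar_le (Rbar_abs (h m)) (b m)).
    { eapply is_lim_seq_le; [| exact L | apply is_lim_seq_const]. intros n; apply Hg. }
    simpl in H. exact H. }
  apply lim_eps. intros e He.
  pose proof (Series_correct b Hb) as Sb. rewrite is_series_Reals in Sb.
  destruct (Sb (e/3)) as [M HM]; [lra|].
  specialize (HM M (le_n _)). unfold Rdist in HM.
  pose proof (lim_sum g h M Hl) as LS. rewrite lim_eps in LS.
  destruct (LS (e/3)) as [N HN]; [lra|].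
  exists N. intros n Hn. specialize (HN n Hn).
  destruct (tail_bound b (g n) M Hb (Hg n)) as [_ T1].
  destruct (tail_bound b h M Hb Hh) as [_ T2].
  rewrite Rabs_minus_sym in HM.
  assert (Series b - sum_f_R0 b M < e/3) by (eapply Rle_lt_trans; [apply Rle_abs| exact HM]).
  replace (Series (g n) - Series h) with
   ((Series (g n) - sum_f_R0 (g n) M) + (sum_f_R0 (g n) M - sum_f_R0 h M)
     - (Series h - sum_f_R0 h M)) by ring.
  eapply Rle_lt_trans. apply Rabs_triang.
  eapply Rle_lt_trans. apply Rplus_le_compat_r. apply Rabs_triang.
  rewrite Rabs_Ropp. lra.
Qed.

Lemma sum_ge_term (d : nat -> R) m n : (forall k, 0 <= d k) -> (m <= n)%nat ->
  d m <= sum_f_R0 d n.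
Proof.
  intros Hd Hmn. induction n.
  - assert (m = 0%nat) by lia. subst. simpl. lra.
  - rewrite tech5. destruct (Nat.eq_dec m (S n)).
    + subst. pose proof (cond_pos_sum d n Hd). lra.
    + assert (d m <= sum_f_R0 d n) by (apply IHn; lia). pose proof (Hd (S n)). lra.
Qed.

Lemma Series_ge_term (d : nat -> R) m : ex_series d -> (forall k, 0 <= d k) ->
  d m <= Series d.
Proof.
  intros E Hd. pose proof (Series_correct d E) as S. rewrite is_series_Reals in S.
  destruct (Rle_or_lt (d m) (Series d)) as [|Hlt]; auto.
  destruct (S (d m - Series d)) as [N HN]; [lra|].
  specialize (HN (max N m) ltac:(lia)). unfold Rdist in HN.
  pose proof (sum_ge_term d m (max N m) Hd ltac:(lia)).
  rewrite Rabs_right in HN by lra. lra.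
Qed.

Lemma Series_nonneg (d : nat -> R) : (forall k, 0 <= d k) -> 0 <= Series d.
Proof.
  intros Hd. destruct (ex_series_dec d) as [E|NE].
  - eapply Rle_trans; [apply (Hd 0%nat)| apply Series_ge_term; auto].
  - unfold Series. replace (Lim_seq (sum_n d)) with (Lim_seq (sum_n d)) by reflexivity.
    destruct (Lim_seq (sum_n d)) eqn:El; simpl; try lra.
    exfalso. apply NE. exists r. unfold is_series.
    assert (ex_lim_seq (sum_n d)).
    { apply ex_lim_seq_incr. intros n. rewrite sum_Sn. unfold plus; simpl. pose proof (Hd (S n)); lra. }
    apply Lim_seq_correct in H. rewrite El in H. exact H.
Qed.

Lemma bounded_ex_series (d : nat -> R) B : (forall k, 0 <= d k) ->
  (forall n, sum_f_R0 d n <= B) -> ex_series d.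
Proof.
  intros Hd HB. apply ex_series_Reals_1. apply growing_cv.
  - intros n. rewrite tech5. pose proof (Hd (S n)); lra.
  - exists B. intros r [i ->]. apply HB.
Qed.

Fixpoint rec_pick (pick : nat -> nat -> nat) (i : nat) : nat :=
  match i with O => pick 0%nat 0%nat | S j => pick (S j) (S (rec_pick pick j)) end.

Definition incr (psi : nat -> nat) := forall i, (psi i < psi (S i))%nat.

Lemma extract (P : nat -> nat -> Prop) :
  (forall i N, exists n, (N <= n)%nat /\ P i n) ->
  exists psi, incr psi /\ forall i, P i (psi i).
Proof.
  intros H.
  assert (X : forall iN : nat * nat, {n | (snd iN <= n)%nat /\ P (fst iN) n}).
  { intros [i N]. apply constructive_indefinite_description. apply H. }
  set (pick := fun i N => proj1_sig (X (i, N))).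
  assert (Hp : forall i N, (N <= pick i N)%nat /\ P i (pick i N)).
  { intros i N. unfold pick. exact (proj2_sig (X (i, N))). }
  clearbody pick.
  exists (rec_pick pick). split.
  - intros i. simpl. destruct (Hp (S i) (S (rec_pick pick i))). lia.
  - intros [|i]; simpl; apply Hp.
Qed.

Lemma incr_ge psi : incr psi -> forall i, (i <= psi i)%nat.
Proof. intros H i. induction i; [lia| specialize (H i); lia]. Qed.

Lemma incr_mono psi : incr psi -> forall i j, (i < j)%nat -> (psi i < psi j)%nat.
Proof.
  intros H i j Hij. induction j; [lia|].
  destruct (Nat.eq_dec i j); [subst; apply H|]. specialize (H j). assert (psi i < psi j)%nat by (apply IHj; lia). lia.
Qed.

Lemma subseq_lim (u : nat -> R) (l : R) psi : incr psi -> is_lim_seq u l ->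
  is_lim_seq (fun n => u (psi n)) l.
Proof.
  intros Hp Hl. rewrite lim_eps in *. intros e He. destruct (Hl e He) as [N HN].
  exists N. intros n Hn. apply HN. pose proof (incr_ge psi Hp n). lia.
Qed.

Lemma inv_small e : 0 < e -> exists N, forall n, (N <= n)%nat -> / INR (S n) < e.
Proof.
  intros He. pose proof is_lim_seq_INR as L. apply is_lim_seq_spec in L.
  destruct (L (/ e)) as [N HN]. exists N. intros n Hn.
  assert (H1 : / e < INR (S n)) by (apply HN; lia).
  assert (0 < / e) by (apply Rinv_0_lt_compat; lra).
  rewrite <- (Rinv_inv e).
  apply Rinv_lt_contravar; [nra| exact H1].
Qed.

Lemma BW1 (v : nat -> R) B : (forall n, Rabs (v n) <= B) ->
  exists psi, incr psi /\ exists l : R, is_lim_seq (fun n => v (psi n)) l.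
Proof.
  intros HB.
  destruct (Bolzano_Weierstrass v (fun c => -B <= c <= B) (compact_P3 _ _)) as [l Hl].
  { intros n. specialize (HB n). apply Rabs_le_between in HB. lra. }
  destruct (extract (fun i n => Rabs (v n - l) < / INR (S i))) as [psi [Hi Hp]].
  { intros i N. apply (Hl (fun y => Rabs (y - l) < / INR (S i)) N).
    assert (Hpos : 0 < / INR (S i)) by (apply Rinv_0_lt_compat, lt_0_INR; lia).
    exists (mkposreal _ Hpos). intros y Hy. exact Hy. }
  exists psi; split; auto. exists l. apply lim_eps. intros e He.
  destruct (inv_small e He) as [N HN]. exists N. intros n Hn.
  eapply Rlt_trans; [apply Hp| apply HN; auto].
Qed.

Fixpoint Psi (F : (nat -> nat) -> nat -> nat -> nat) (j : nat) : nat -> nat :=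
  match j with O => fun n => n | S j' => fun n => Psi F j' (F (Psi F j') j' n) end.

Lemma diag (z : nat -> nat -> R) B : (forall n k, Rabs (z n k) <= B) ->
  exists sigma, incr sigma /\ exists y : nat -> R,
    forall k, is_lim_seq (fun n => z (sigma n) k) (y k).
Proof.
  intros HB.
  assert (X : forall (p : (nat -> nat) * nat), {phi | incr phi /\
     exists l : R, is_lim_seq (fun n => z (fst p (phi n)) (snd p)) l}).
  { intros [psi k]. apply constructive_indefinite_description.
    destruct (BW1 (fun n => z (psi n) k) B) as [phi [H1 [l H2]]]; [intros n; apply HB|].
    exists phi; split; auto. exists l; exact H2. }
  set (F := fun psi k => proj1_sig (X (psi, k))).
  assert (HF : forall psi k, incr (F psi k) /\
     exists l : R, is_lim_seq (fun n => z (psi (F psi k n)) k) l).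
  { intros psi k. exact (proj2_sig (X (psi, k))). }
  clearbody F.
  assert (Pincr : forall j, incr (Psi F j)).
  { induction j; intros i; simpl. lia. apply incr_mono; auto. apply HF. }
  assert (Rel : forall k d, exists rho, (forall n, (n <= rho n)%nat) /\
     forall n, Psi F (S k + d)%nat n = Psi F (S k) (rho n)).
  { intros k d. induction d.
    - exists (fun n => n). split; [auto | intros n; now rewrite Nat.add_0_r].
    - destruct IHd as [rho [Hr He]].
      exists (fun n => rho (F (Psi F (S k + d)%nat) (S k + d)%nat n)). split.
      + intros n. pose proof (incr_ge _ (proj1 (HF (Psi F (S k + d)%nat) (S k + d)%nat)) n).
        specialize (Hr (F (Psi F (S k + d)%nat) (S k + d)%nat n)). lia.
      + intros n. replace (S k + S d)%nat with (S (S k + d)%nat) by lia.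
        transitivity (Psi F (S k + d)%nat (F (Psi F (S k + d)%nat) (S k + d)%nat n)); [reflexivity| apply He]. }
  exists (fun n => Psi F (S n) n). split.
  - intros n. change (Psi F (S n) n < Psi F (S n) (F (Psi F (S n)) (S n) (S n)))%nat.
    apply incr_mono; auto. pose proof (incr_ge _ (proj1 (HF (Psi F (S n)) (S n))) (S n)). lia.
  - exists (fun k => real (Lim_seq (fun n => z (Psi F (S k) n) k))). intros k.
    destruct (proj2 (HF (Psi F k) k)) as [l Hl].
    change (is_lim_seq (fun n => z (Psi F (S k) n) k) l) in Hl.
    rewrite (is_lim_seq_unique _ _ Hl). simpl.
    rewrite lim_eps in *. intros e He. destruct (Hl e He) as [N HN].
    exists (max N k). intros n Hn.
    destruct (Rel k (n - k)%nat) as [rho [Hr He2]].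
    change (Rabs (z (Psi F (S n) n) k - l) < e). replace (S n) with (S k + (n - k))%nat by lia. rewrite He2.
    apply HN. specialize (Hr n). lia.
Qed.

Definition bnd (z : seqR) (B : R) := forall k, Rabs (z k) <= B.

Lemma Lub_fin z B : bnd z B ->
  Lub_Rbar (fun r => exists k, r = Rabs (z k)) = Finite (sup_norm z).
Proof.
  intros H. unfold sup_norm.
  pose proof (Lub_Rbar_correct (fun r => exists k, r = Rabs (z k))) as [Hub Hl].
  set (L := Lub_Rbar _) in *. clearbody L.
  destruct L as [r| |]; simpl; auto.
  - exfalso. specialize (Hl B). simpl in Hl. apply Hl. intros r [k ->]. simpl. apply H.
  - exfalso. specialize (Hub (Rabs (z 0%nat)) (ex_intro _ 0%nat eq_refl)). simpl in Hub. exact Hub.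
Qed.

Lemma sup_ge z B k : bnd z B -> Rabs (z k) <= sup_norm z.
Proof.
  intros H. pose proof (Lub_fin z B H) as E.
  pose proof (Lub_Rbar_correct (fun r => exists k, r = Rabs (z k))) as [Hub Hl].
  rewrite E in Hub. apply (Hub (Rabs (z k))). now exists k.
Qed.

Lemma sup_le z B C : bnd z B -> (forall k, Rabs (z k) <= C) -> sup_norm z <= C.
Proof.
  intros H HC. pose proof (Lub_fin z B H) as E.
  pose proof (Lub_Rbar_correct (fun r => exists k, r = Rabs (z k))) as [Hub Hl].
  rewrite E in Hl. apply (Hl C). intros r [k ->]. simpl. apply HC.
Qed.

Lemma sup_nonneg z B : bnd z B -> 0 <= sup_norm z.
Proof. intros H. eapply Rle_trans; [apply (Rabs_pos (z 0%nat))| eapply sup_ge; eauto]. Qed.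

Lemma sup_approx z B e : bnd z B -> 0 < e -> exists k, sup_norm z - e < Rabs (z k).
Proof.
  intros H He. apply NNPP. intros Hn.
  assert (sup_norm z <= sup_norm z - e); [|lra].
  apply (sup_le z B). auto. intros k. apply Rnot_lt_le. intros Hk. apply Hn. now exists k.
Qed.

Lemma bnd_sup z B : bnd z B -> bnd z (sup_norm z).
Proof. intros H k. eapply sup_ge; eauto. Qed.

Lemma c0_bnd z : in_c0 z -> exists B, bnd z B.
Proof.
  intros H. unfold in_c0 in H. rewrite lim_eps in H. destruct (H 1) as [N HN]; [lra|].
  exists (1 + sum_f_R0 (fun k => Rabs (z k)) N). intros k.
  pose proof (cond_pos_sum (fun k => Rabs (z k)) N (fun k => Rabs_pos _)).
  destruct (Compare_dec.le_lt_dec k N).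
  - pose proof (sum_ge_term (fun k => Rabs (z k)) k N (fun k => Rabs_pos _) l). simpl in H1. lra.
  - specialize (HN k ltac:(lia)). rewrite Rminus_0_r in HN. lra.
Qed.

Definition phi (u : nat -> seqR) (a : nat -> nat) m := seq_sub (u m) (unit_vec (a m)).
Definition wgt (a : nat -> nat) m := / 2 ^ (a m * a m).
Definition Tm u a (z : seqR) m := wgt a m * Rabs (inner z (phi u a m)).

Lemma read_norm_eq u a z : read_norm u a z = sup_norm z + Series (Tm u a z).
Proof. reflexivity. Qed.

Lemma zero_sum (f : nat -> R) M : (forall k, (k <= M)%nat -> f k = 0) -> sum_f_R0 f M = 0.
Proof. apply sum_eq_R0. Qed.

Lemma delta_sum (z : seqR) k0 P M : (k0 <= M)%nat ->
  sum_f_R0 (fun k => z k * (if Nat.eqb k k0 then P else 0)) M = P * z k0.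
Proof.
  intros H. induction M.
  - assert (k0 = 0%nat) by lia. subst. simpl. ring.
  - rewrite tech5. destruct (Nat.eq_dec k0 (S M)).
    + subst. rewrite zero_sum. rewrite Nat.eqb_refl. ring.
      intros k Hk. destruct (Nat.eqb_spec k (S M)); [lia| ring].
    + rewrite IHM by lia. destruct (Nat.eqb_spec (S M) k0); [lia| ring].
Qed.

Lemma a_ge u a : read_data u a -> forall m, (S m <= a m)%nat.
Proof.
  intros (_ & _ & Hpos & Hinc & _). induction m; [apply Hpos|]. specialize (Hinc m). lia.
Qed.

Lemma inner_phi u a : read_data u a -> forall z m,
  inner z (phi u a m) = sum_f_R0 (fun k => z k * u m k) (a m) - z (a m).
Proof.
  intros Hd z m. pose proof Hd as (_ & _ & _ & _ & Hsupp & _).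
  unfold inner, phi, seq_sub.
  assert (Hz : forall k, (a m < k)%nat -> z k * (u m k - unit_vec (a m) k) = 0).
  { intros k Hk. unfold unit_vec. destruct (Nat.eqb_spec k (a m)); [lia|].
    destruct (Req_dec (u m k) 0) as [E|E]; [rewrite E; ring|]. specialize (Hsupp m k E). lia. }
  rewrite (proj1 (Series_fin _ (a m) Hz)).
  rewrite (tech11 _ (fun k => z k * u m k) (fun k => z k * unit_vec (a m) k)).
  + unfold unit_vec. rewrite delta_sum by lia. ring.
  + intros i. ring.
Qed.

Lemma l1_fin u a : read_data u a -> forall m,
  l1_norm (u m) = sum_f_R0 (fun k => Rabs (u m k)) (a m).
Proof.
  intros Hd m. pose proof Hd as (_ & _ & _ & _ & Hsupp & _). unfold l1_norm.
  apply Series_fin. intros k Hk.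
  destruct (Req_dec (u m k) 0) as [E|E]; [rewrite E; apply Rabs_R0|]. specialize (Hsupp m k E). lia.
Qed.

Lemma inner_phi_bound u a : read_data u a -> forall z B m, bnd z B ->
  Rabs (inner z (phi u a m)) <= B * (INR (a m) + 1).
Proof.
  intros Hd z B m HB. rewrite (inner_phi u a Hd).
  pose proof Hd as (_ & _ & _ & _ & _ & Hl1).
  specialize (Hl1 m). rewrite (l1_fin u a Hd) in Hl1.
  assert (B0 : 0 <= B) by (eapply Rle_trans; [apply Rabs_pos| apply (HB 0%nat)]).
  assert (Rabs (sum_f_R0 (fun k => z k * u m k) (a m)) <= B * sum_f_R0 (fun k => Rabs (u m k)) (a m)).
  { eapply Rle_trans. apply sum_f_R0_triangle. rewrite scal_sum. apply sum_Rle.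
    intros k _. rewrite Rabs_mult. rewrite Rmult_comm. apply Rmult_le_compat_l; [apply Rabs_pos| apply HB]. }
  unfold Rminus. eapply Rle_trans; [apply Rabs_triang|]. rewrite Rabs_Ropp.
  pose proof (HB (a m)).
  assert (B * sum_f_R0 (fun k => Rabs (u m k)) (a m) <= B * INR (a m)) by (apply Rmult_le_compat_l; lra).
  lra.
Qed.

Lemma pow2_ge n : INR n + 1 <= 2 ^ n.
Proof. pose proof (Rle_pow_lin 1 n ltac:(lra)). replace (1+1) with 2 in H by ring. lra. Qed.

Lemma wgt_bound u a : read_data u a -> forall m, wgt a m * (INR (a m) + 1) <= (/ 2) ^ m.
Proof.
  intros Hd m. pose proof (a_ge u a Hd m) as Ha. unfold wgt. set (A := a m) in *.
  rewrite pow_inv.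
  assert (P1 : 2 ^ A * 2 ^ m <= 2 ^ (A * A)).
  { rewrite <- pow_add. apply Rle_pow; [lra|]. nia. }
  pose proof (pow2_ge A).
  assert (0 < 2 ^ A) by (apply pow_lt; lra).
  assert (0 < 2 ^ m) by (apply pow_lt; lra).
  assert (0 < 2 ^ (A * A)) by (apply pow_lt; lra).
  apply (Rmult_le_reg_r (2 ^ (A * A) * 2 ^ m)). nra.
  replace (/ 2 ^ (A * A) * (INR A + 1) * (2 ^ (A * A) * 2 ^ m)) with ((INR A + 1) * 2 ^ m) by (field; lra).
  replace (/ 2 ^ m * (2 ^ (A * A) * 2 ^ m)) with (2 ^ (A * A)) by (field; lra).
  nra.
Qed.

Lemma wgt_pos a m : 0 < wgt a m.
Proof. unfold wgt. apply Rinv_0_lt_compat, pow_lt; lra. Qed.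

Lemma Tm_bound u a : read_data u a -> forall z B m, bnd z B ->
  0 <= Tm u a z m <= B * (/ 2) ^ m.
Proof.
  intros Hd z B m HB. unfold Tm. pose proof (wgt_pos a m). split.
  - apply Rmult_le_pos; [lra| apply Rabs_pos].
  - pose proof (inner_phi_bound u a Hd z B m HB).
    pose proof (wgt_bound u a Hd m).
    assert (B0 : 0 <= B) by (eapply Rle_trans; [apply Rabs_pos| apply (HB 0%nat)]).
    eapply Rle_trans. apply Rmult_le_compat_l; [lra| exact H0].
    replace (wgt a m * (B * (INR (a m) + 1))) with (B * (wgt a m * (INR (a m) + 1))) by ring.
    apply Rmult_le_compat_l; auto.
Qed.

Lemma geom_ex B : ex_series (fun m => B * (/ 2) ^ m).
Proof.
  apply (@ex_series_scal_l R_AbsRing R_NormedModule B (fun m => (/2)^m)).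
  apply ex_series_geom. rewrite Rabs_pos_eq; lra.
Qed.

Lemma geom_series B : Series (fun m => B * (/ 2) ^ m) = 2 * B.
Proof.
  rewrite Series_scal_l, Series_geom by (rewrite Rabs_pos_eq; lra). field.
Qed.

Lemma Tm_ex u a : read_data u a -> forall z B, bnd z B -> ex_series (Tm u a z).
Proof.
  intros Hd z B HB. apply (@ex_series_le R_AbsRing R_CompleteNormedModule _ (fun m => B * (/2)^m)).
  - intros m. unfold norm; simpl; unfold abs; simpl. destruct (Tm_bound u a Hd z B m HB).
    rewrite Rabs_pos_eq; lra.
  - apply geom_ex.
Qed.

Lemma S_bounds u a : read_data u a -> forall z B, bnd z B ->
  0 <= Series (Tm u a z) <= 2 * B.
Proof.
  intros Hd z B HB. split.
  - apply Series_nonneg. intros k. apply (Tm_bound u a Hd z B k HB).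
  - rewrite <- geom_series. apply Series_le; [| apply geom_ex].
    intros n. apply (Tm_bound u a Hd z B n HB).
Qed.

Lemma norm_coord u a : read_data u a -> forall z B k, bnd z B ->
  Rabs (z k) <= read_norm u a z.
Proof.
  intros Hd z B k HB. rewrite read_norm_eq. pose proof (sup_ge z B k HB).
  pose proof (S_bounds u a Hd z B HB). lra.
Qed.

Lemma norm_le3 u a : read_data u a -> forall z B, bnd z B ->
  read_norm u a z <= 3 * sup_norm z.
Proof.
  intros Hd z B HB. rewrite read_norm_eq. pose proof (bnd_sup z B HB) as H.
  pose proof (S_bounds u a Hd z _ H). lra.
Qed.

Lemma norm1_bnd u a : read_data u a -> forall z, in_c0 z -> read_norm u a z = 1 -> bnd z 1.
Proof.
  intros Hd z Hz H1 k. destruct (c0_bnd z Hz) as [B HB]. rewrite <- H1. eapply norm_coord; eauto.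
Qed.

Lemma fin_c0 (z : seqR) N : (forall k, (N < k)%nat -> z k = 0) -> in_c0 z.
Proof.
  intros H. unfold in_c0. apply (is_lim_seq_ext_loc (fun _ => 0)).
  - exists (S N). intros n Hn. symmetry. apply H. lia.
  - apply is_lim_seq_const.
Qed.

Definition trunc (N : nat) (z : seqR) : seqR := fun k => if Nat.leb k N then z k else 0.

Lemma trunc_c0 N z : in_c0 (trunc N z).
Proof. apply (fin_c0 _ N). intros k Hk. unfold trunc. destruct (Nat.leb_spec k N); [lia|auto]. Qed.

Lemma unit_c0 m : in_c0 (unit_vec m).
Proof. apply (fin_c0 _ m). intros k Hk. unfold unit_vec. destruct (Nat.eqb_spec k m); [lia|auto]. Qed.

Section Functional.
Variables (u : nat -> seqR) (a : nat -> nat) (Hd : read_data u a) (f : seqR -> R)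
  (Hf : bounded_linear_functional u a f).

Definition cf k := f (unit_vec k).

Lemma f_trunc z N : f (trunc N z) = sum_f_R0 (fun k => z k * cf k) N.
Proof.
  destruct Hf as (Hadd & Hsc & _).
  induction N.
  - simpl. unfold cf. rewrite <- Hsc by apply unit_c0. f_equal.
    apply functional_extensionality. intros k. unfold trunc, seq_scal, unit_vec.
    destruct (Nat.leb_spec k 0), (Nat.eqb_spec k 0); subst; try lia; ring.
  - rewrite tech5. rewrite <- IHN. unfold cf. rewrite <- Hsc by apply unit_c0.
    rewrite <- Hadd by (apply trunc_c0 || (unfold in_c0; apply is_lim_seq_ext with (fun k => z (S N) * unit_vec (S N) k); [reflexivity|];
       replace (Finite 0) with (Rbar_mult (z (S N)) 0) by (simpl; f_equal; ring); apply is_lim_seq_scal_l; apply unit_c0)).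
    f_equal. apply functional_extensionality. intros k. unfold trunc, seq_add, seq_scal, unit_vec.
    destruct (Nat.leb_spec k (S N)), (Nat.leb_spec k N), (Nat.eqb_spec k (S N)); subst; try lia; ring.
Qed.

Lemma read_norm_nonneg z : in_c0 z -> 0 <= read_norm u a z.
Proof.
  intros Hz. destruct (c0_bnd z Hz) as [B HB]. rewrite read_norm_eq.
  pose proof (sup_nonneg z B HB). pose proof (S_bounds u a Hd z B HB). lra.
Qed.

Lemma f_bound : exists C, 0 <= C /\ forall y, in_c0 y -> Rabs (f y) <= C * read_norm u a y.
Proof.
  destruct Hf as (_ & _ & C & HC). exists (Rabs C). split; [apply Rabs_pos|].
  intros y Hy. eapply Rle_trans; [apply HC; auto|]. apply Rmult_le_compat_r.
  apply read_norm_nonneg; auto. apply Rle_abs.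
Qed.

Lemma coef_ex : ex_series (fun k => Rabs (cf k)).
Proof.
  destruct f_bound as [C [C0 HC]].
  apply (bounded_ex_series _ (3 * C)); [intros; apply Rabs_pos|].
  intros N. set (s := fun k => if Rle_dec 0 (cf k) then 1 else - (1)).
  assert (E : f (trunc N s) = sum_f_R0 (fun k => Rabs (cf k)) N).
  { rewrite f_trunc. apply sum_eq. intros i _. unfold s. destruct (Rle_dec 0 (cf i)).
    - rewrite Rabs_pos_eq; lra.
    - rewrite Rabs_left; lra. }
  rewrite <- E.
  assert (Hb : bnd (trunc N s) 1).
  { intros k. unfold trunc, s. destruct (Nat.leb k N); [destruct (Rle_dec 0 (cf k))|];
    rewrite ?Rabs_R1, ?Rabs_Ropp, ?Rabs_R1, ?Rabs_R0; lra. }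
  eapply Rle_trans; [apply Rle_abs|]. eapply Rle_trans; [apply HC, trunc_c0|].
  eapply Rle_trans. apply Rmult_le_compat_l; auto. eapply norm_le3; eauto.
  pose proof (sup_le _ _ 1 Hb Hb). nra.
Qed.

Lemma f_repr z : in_c0 z -> is_series (fun k => z k * cf k) (f z).
Proof.
  intros Hz. destruct f_bound as [C [C0 HC]]. destruct Hf as (Hadd & _ & _).
  rewrite is_series_Reals. intros e He.
  set (e' := e / (3 * C + 1)).
  assert (He' : 0 < e') by (unfold e'; apply Rdiv_lt_0_compat; lra).
  pose proof Hz as Hz'. unfold in_c0 in Hz'. rewrite lim_eps in Hz'.
  destruct (Hz' e' He') as [N0 HN0]. exists N0. intros n Hn.
  set (Rz := fun k => if Nat.leb k n then 0 else z k).
  assert (RC : in_c0 Rz).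
  { unfold in_c0. apply (is_lim_seq_ext_loc z); auto. exists (S n). intros k Hk. unfold Rz.
    destruct (Nat.leb_spec k n); [lia| auto]. }
  assert (Ez : z = seq_add (trunc n z) Rz).
  { apply functional_extensionality. intros k. unfold seq_add, trunc, Rz. destruct (Nat.leb k n); ring. }
  assert (Ef : f z = sum_f_R0 (fun k => z k * cf k) n + f Rz).
  { rewrite Ez at 1. rewrite Hadd by (auto; apply trunc_c0). rewrite f_trunc. reflexivity. }
  unfold Rdist. rewrite Ef. replace (sum_f_R0 (fun k => z k * cf k) n - (sum_f_R0 (fun k => z k * cf k) n + f Rz)) with (- f Rz) by ring.
  rewrite Rabs_Ropp.
  assert (Hb : bnd Rz e').
  { intros k. unfold Rz. destruct (Nat.leb_spec k n). rewrite Rabs_R0; lra.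
    specialize (HN0 k ltac:(lia)). rewrite Rminus_0_r in HN0. lra. }
  eapply Rle_lt_trans; [apply HC; auto|].
  eapply Rle_lt_trans. apply Rmult_le_compat_l; auto. eapply norm_le3; eauto.
  pose proof (sup_le _ _ e' Hb Hb).
  assert (C * (3 * sup_norm Rz) <= C * (3 * e')) by (apply Rmult_le_compat_l; lra).
  assert (C * (3 * e') < e).
  { unfold e'. apply (Rmult_lt_reg_r (3 * C + 1)); [lra|].
    replace (C * (3 * (e / (3 * C + 1))) * (3 * C + 1)) with (3 * C * e) by (field; lra). nra. }
  lra.
Qed.

End Functional.

Lemma weak_from_coord u a : read_data u a -> forall (xs : nat -> seqR) x,
  (forall n, in_c0 (xs n)) -> (forall n, bnd (xs n) 1) -> in_c0 x ->
  (forall k, is_lim_seq (fun n => xs n k) (x k)) -> weak_conv u a xs x.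
Proof.
  intros Hd xs x Hc Hb Hx Hl f Hf.
  apply (is_lim_seq_ext (fun n => Series (fun k => xs n k * cf f k))).
  { intros n. apply is_series_unique. apply (f_repr u a Hd f Hf); auto. }
  rewrite <- (is_series_unique _ _ (f_repr u a Hd f Hf x Hx)).
  apply (dom_series _ _ (fun k => Rabs (cf f k))).
  - apply (coef_ex u a Hd f Hf).
  - intros n m. rewrite Rabs_mult. specialize (Hb n m). pose proof (Rabs_pos (cf f m)). nra.
  - intros m. apply is_lim_seq_mult'; [apply Hl| apply is_lim_seq_const].
Qed.

Lemma sum_lin (f g : nat -> R) p q M :
  sum_f_R0 (fun k => p * f k + q * g k) M = p * sum_f_R0 f M + q * sum_f_R0 g M.
Proof. induction M; simpl; [ring| rewrite IHM; ring]. Qed.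

Lemma inner_lin u a : read_data u a -> forall (x z : seqR) p q m,
  inner (fun k => p * x k + q * z k) (phi u a m) = p * inner x (phi u a m) + q * inner z (phi u a m).
Proof.
  intros Hd x z p q m. rewrite !(inner_phi u a Hd).
  rewrite (sum_eq _ (fun k => p * (x k * u m k) + q * (z k * u m k))) by (intros; ring).
  rewrite sum_lin. ring.
Qed.

Lemma abs_eq_sign p q : Rabs p + Rabs q = Rabs (p + q) -> 0 <= p * q.
Proof.
  unfold Rabs. destruct (Rcase_abs p), (Rcase_abs q), (Rcase_abs (p + q)); intros; nra.
Qed.

Lemma eps_lemma A C : (forall e, 0 < e -> 0 <= A + e * C) -> 0 <= A.
Proof.
  intros H. destruct (Rle_or_lt 0 A) as [|HA]; auto.
  set (e := - A / (2 * (Rabs C + 1))).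
  assert (0 < Rabs C + 1) by (pose proof (Rabs_pos C); lra).
  assert (He : 0 < e) by (unfold e; apply Rdiv_lt_0_compat; lra).
  specialize (H e He).
  assert (e * C <= e * Rabs C) by (apply Rmult_le_compat_l; [lra| apply Rle_abs]).
  assert (e * (Rabs C + 1) = - A / 2) by (unfold e; field; lra).
  nra.
Qed.

Lemma dlin d r : 0 <= d <= 1 -> - Rabs r <= d * r <= Rabs r.
Proof. intros Hd. unfold Rabs. destruct (Rcase_abs r); split; nra. Qed.

Lemma Q2R_Z z : Q2R (inject_Z z) = IZR z.
Proof. unfold Q2R, inject_Z. simpl. field. Qed.

Section Core.
Variables (u : nat -> seqR) (a : nat -> nat) (Hd : read_data u a)
  (x : seqR) (Hx : in_c0 x) (Hx1 : read_norm u a x = 1)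
  (zs : nat -> seqR) (Hz : forall n, in_c0 (zs n)) (Hz1 : forall n, read_norm u a (zs n) = 1)
  (Hlim : is_lim_seq (fun n => read_norm u a (seq_add x (zs n))) 2)
  (y : seqR) (Hy : forall k, is_lim_seq (fun n => zs n k) (y k)).

Lemma zb n : bnd (zs n) 1.
Proof. apply (norm1_bnd u a Hd); auto. Qed.
Lemma xb : bnd x 1.
Proof. apply (norm1_bnd u a Hd); auto. Qed.
Lemma yb : bnd y 1.
Proof.
  intros k. assert (L := is_lim_seq_abs _ _ (Hy k)).
  assert (Rbar_le (Rbar_abs (y k)) 1).
  { eapply is_lim_seq_le; [| exact L | apply is_lim_seq_const]. intros n; apply zb. }
  exact H.
Qed.
Lemma xzb n : bnd (seq_add x (zs n)) 2.
Proof.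
  intros k. unfold seq_add. eapply Rle_trans; [apply Rabs_triang|].
  pose proof (xb k). pose proof (zb n k). lra.
Qed.

Definition delta n := 2 - read_norm u a (seq_add x (zs n)).

Lemma delta_lim : is_lim_seq delta 0.
Proof.
  unfold delta. replace 0 with (2 - 2) by ring.
  apply is_lim_seq_minus'; [apply is_lim_seq_const| exact Hlim].
Qed.

Lemma inner_add z m : inner (seq_add x z) (phi u a m) = inner x (phi u a m) + inner z (phi u a m).
Proof.
  unfold seq_add. rewrite <- (Rmult_1_l (inner x _)), <- (Rmult_1_l (inner z _)).
  rewrite <- inner_lin by auto. f_equal. apply functional_extensionality; intros; ring.
Qed.

Definition Dm n m := Rabs (inner x (phi u a m)) + Rabs (inner (zs n) (phi u a m))
   - Rabs (inner (seq_add x (zs n)) (phi u a m)).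

Lemma Dm_nonneg n m : 0 <= Dm n m.
Proof. unfold Dm. rewrite inner_add. pose proof (Rabs_triang (inner x (phi u a m)) (inner (zs n) (phi u a m))). lra. Qed.

Lemma deficit n : sup_norm x + sup_norm (zs n) - sup_norm (seq_add x (zs n))
   + Series (fun m => wgt a m * Dm n m) = delta n.
Proof.
  unfold delta. rewrite !read_norm_eq in *.
  assert (E : Series (fun m => wgt a m * Dm n m) =
     Series (Tm u a x) + Series (Tm u a (zs n)) - Series (Tm u a (seq_add x (zs n)))).
  { rewrite <- Series_plus, <- Series_minus.
    - apply Series_ext. intros m. unfold Tm, Dm. ring.
    - eapply ex_series_ext; [| apply (@ex_series_plus R_AbsRing R_NormedModule);
        [apply (Tm_ex u a Hd x 1 xb)| apply (Tm_ex u a Hd (zs n) 1 (zb n))]]. intros; reflexivity.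
    - apply (Tm_ex u a Hd _ 2 (xzb n)).
    - apply (Tm_ex u a Hd x 1 xb).
    - apply (Tm_ex u a Hd (zs n) 1 (zb n)). }
  rewrite E. specialize (Hz1 n). rewrite read_norm_eq in Hz1. lra.
Qed.

Lemma sup_deficit n : 0 <= sup_norm x + sup_norm (zs n) - sup_norm (seq_add x (zs n)).
Proof.
  assert (sup_norm (seq_add x (zs n)) <= sup_norm x + sup_norm (zs n)); [|lra].
  apply (sup_le _ 2 _ (xzb n)). intros k. unfold seq_add.
  eapply Rle_trans; [apply Rabs_triang|].
  pose proof (sup_ge x 1 k xb). pose proof (sup_ge (zs n) 1 k (zb n)). lra.
Qed.

Lemma ex_D n : ex_series (fun m => wgt a m * Dm n m).
Proof.
  apply (@ex_series_le R_AbsRing R_CompleteNormedModule _ (fun m => 4 * (/2)^m)); [|apply geom_ex].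
  intros m. unfold norm; simpl; unfold abs; simpl.
  pose proof (Dm_nonneg n m). pose proof (wgt_pos a m).
  rewrite Rabs_pos_eq by nra.
  pose proof (Tm_bound u a Hd x 1 m xb). pose proof (Tm_bound u a Hd (zs n) 1 m (zb n)).
  pose proof (Tm_bound u a Hd _ 2 m (xzb n)).
  unfold Tm, Dm in *. nra.
Qed.

Lemma sd_le n : sup_norm x + sup_norm (zs n) - sup_norm (seq_add x (zs n)) <= delta n.
Proof.
  rewrite <- deficit. pose proof (Series_nonneg (fun m => wgt a m * Dm n m)).
  assert (0 <= Series (fun m => wgt a m * Dm n m)); [|lra].
  apply H. intros k. pose proof (Dm_nonneg n k). pose proof (wgt_pos a k). nra.
Qed.

Lemma Dm_le n m : wgt a m * Dm n m <= delta n.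
Proof.
  rewrite <- deficit. pose proof (sup_deficit n).
  pose proof (Series_ge_term (fun m => wgt a m * Dm n m) m (ex_D n)).
  assert (wgt a m * Dm n m <= Series (fun m => wgt a m * Dm n m)); [|lra].
  apply H0. intros k. pose proof (Dm_nonneg n k). pose proof (wgt_pos a k). nra.
Qed.

Lemma beta_lim m : is_lim_seq (fun n => inner (zs n) (phi u a m)) (inner y (phi u a m)).
Proof.
  apply (is_lim_seq_ext (fun n => sum_f_R0 (fun k => zs n k * u m k) (a m) - zs n (a m))).
  { intros n. rewrite (inner_phi u a Hd). reflexivity. }
  rewrite (inner_phi u a Hd). apply is_lim_seq_minus'; [| apply Hy].
  apply (lim_sum (fun n k => zs n k * u m k) (fun k => y k * u m k)).
  intros k. apply is_lim_seq_mult'; [apply Hy| apply is_lim_seq_const].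
Qed.

Lemma sign_cond m : 0 <= inner x (phi u a m) * inner y (phi u a m).
Proof.
  apply abs_eq_sign.
  set (al := inner x (phi u a m)). set (ga := inner y (phi u a m)).
  assert (L1 : is_lim_seq (fun n => Dm n m) (Rabs al + Rabs ga - Rabs (al + ga))).
  { unfold Dm. apply (is_lim_seq_ext (fun n => Rabs al + Rabs (inner (zs n) (phi u a m)) - Rabs (al + inner (zs n) (phi u a m)))).
    { intros n. rewrite inner_add. reflexivity. }
    apply is_lim_seq_minus'; [apply is_lim_seq_plus'; [apply is_lim_seq_const|]|].
    - apply (is_lim_seq_abs _ ga). apply beta_lim.
    - apply (is_lim_seq_abs _ (al + ga)). apply is_lim_seq_plus'; [apply is_lim_seq_const| apply beta_lim]. }
  assert (L2 : is_lim_seq (fun n => Dm n m) 0).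
  { apply (is_lim_seq_le_le (fun _ => 0) _ (fun n => delta n / wgt a m)).
    - intros n. split; [apply Dm_nonneg|]. pose proof (Dm_le n m). pose proof (wgt_pos a m).
      apply (Rmult_le_reg_l (wgt a m)); auto. replace (wgt a m * (delta n / wgt a m)) with (delta n) by (field; lra). lra.
    - apply is_lim_seq_const.
    - replace (Finite 0) with (Rbar_mult (/ wgt a m) 0) by (simpl; f_equal; ring).
      apply (is_lim_seq_ext (fun n => / wgt a m * delta n)); [intros; unfold Rdiv; ring|].
      apply is_lim_seq_scal_l. apply delta_lim. }
  apply is_lim_seq_unique in L1. apply is_lim_seq_unique in L2. rewrite L1 in L2. injection L2. lra.
Qed.

Lemma two_delta (z : seqR) k0 j P Q M : (k0 <= M)%nat -> (j <= M)%nat ->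
  sum_f_R0 (fun k => z k * ((if Nat.eqb k k0 then P else 0) + (if Nat.eqb k j then Q else 0))) M
  = P * z k0 + Q * z j.
Proof.
  intros H1 H2.
  rewrite (sum_eq _ (fun k => 1 * (z k * (if Nat.eqb k k0 then P else 0)) + 1 * (z k * (if Nat.eqb k j then Q else 0))))
    by (intros; ring).
  rewrite sum_lin, !delta_sum by auto. ring.
Qed.

Lemma int_test k0 j (P Q : Z) : IZR P * x k0 + IZR Q * x j > 0 ->
  IZR P * y k0 + IZR Q * y j >= -1.
Proof.
  intros Hc.
  set (v := fun k => (if Nat.eqb k k0 then IZR P else 0) + (if Nat.eqb k j then IZR Q else 0)).
  assert (Q0 : Q2R 0 = 0) by (unfold Q2R; simpl; field).
  assert (Hv : in_c00Q v).
  { split.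
    - exists (S (max k0 j)). intros k Hk. unfold v.
      destruct (Nat.eqb_spec k k0), (Nat.eqb_spec k j); try lia; ring.
    - intros k. exists ((if Nat.eqb k k0 then inject_Z P else 0) + (if Nat.eqb k j then inject_Z Q else 0))%Q.
      rewrite Q2R_plus. unfold v. destruct (Nat.eqb k k0), (Nat.eqb k j); rewrite ?Q2R_Z, ?Q0; ring. }
  set (c := IZR P * x k0 + IZR Q * x j) in *.
  pose proof Hx as Hx'. unfold in_c0 in Hx'. rewrite lim_eps in Hx'.
  destruct (Hx' c ltac:(lra)) as [N1 HN1].
  pose proof Hd as (_ & Hall & _).
  destruct (Hall v Hv (max N1 (max k0 j))) as [m [Hm Huv]].
  pose proof (a_ge u a Hd m) as Ham.
  pose proof (sign_cond m) as S.
  rewrite !(inner_phi u a Hd) in S. rewrite Huv in S. unfold v in S.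
  rewrite !two_delta in S by lia. fold c in S.
  specialize (HN1 (a m) ltac:(lia)). rewrite Rminus_0_r in HN1.
  pose proof (Rle_abs (x (a m))). pose proof (yb (a m)) as Hya. apply Rabs_le_between in Hya.
  nra.
Qed.

Lemma real_test k0 j p q : p * x k0 + q * x j > 0 -> p * y k0 + q * y j >= 0.
Proof.
  intros Hc. apply Rle_ge. apply Rnot_lt_le. intros Hs.
  set (c := p * x k0 + q * x j) in *. set (s := p * y k0 + q * y j) in *.
  pose proof is_lim_seq_INR as L. apply is_lim_seq_spec in L.
  destruct (L ((Rabs (x k0) + Rabs (x j)) / c)) as [N1 HN1].
  destruct (L (3 / (- s))) as [N2 HN2].
  set (n := max N1 N2).
  specialize (HN1 n ltac:(lia)). specialize (HN2 n ltac:(lia)).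
  destruct (archimed (INR n * p)) as [P1 P2].
  destruct (archimed (INR n * q)) as [Q1 Q2].
  set (P := up (INR n * p)) in *. set (Q := up (INR n * q)) in *.
  set (d1 := IZR P - INR n * p). set (d2 := IZR Q - INR n * q).
  assert (D1 : 0 <= d1 <= 1) by (unfold d1; lra).
  assert (D2 : 0 <= d2 <= 1) by (unfold d2; lra).
  assert (E1 : forall r, IZR P * r = INR n * (p * r) + d1 * r) by (intros; unfold d1; ring).
  assert (E2 : forall r, IZR Q * r = INR n * (q * r) + d2 * r) by (intros; unfold d2; ring).
  pose proof (dlin d1 (x k0) D1). pose proof (dlin d2 (x j) D2).
  pose proof (dlin d1 (y k0) D1). pose proof (dlin d2 (y j) D2).
  pose proof (yb k0). pose proof (yb j).
  assert (Hn1 : INR n * c > Rabs (x k0) + Rabs (x j)).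
  { assert ((Rabs (x k0) + Rabs (x j)) / c * c = Rabs (x k0) + Rabs (x j)) by (field; lra). nra. }
  assert (Hn2 : INR n * (- s) > 3).
  { assert (3 / (- s) * (- s) = 3) by (field; lra). nra. }
  assert (T : IZR P * x k0 + IZR Q * x j > 0).
  { rewrite E1, E2. assert (INR n * (p * x k0) + INR n * (q * x j) = INR n * c) by (unfold c; ring). lra. }
  pose proof (int_test k0 j P Q T) as T2. rewrite E1, E2 in T2.
  assert (INR n * (p * y k0) + INR n * (q * y j) = INR n * s) by (unfold s; ring).
  lra.
Qed.

Lemma x_nonzero : exists k0, x k0 <> 0.
Proof.
  apply NNPP. intros H.
  assert (Hb : bnd x 0).
  { intros k. destruct (Req_dec (x k) 0) as [E|E]; [rewrite E, Rabs_R0; lra| exfalso; apply H; now exists k]. }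
  pose proof (norm_le3 u a Hd x 0 Hb). pose proof (sup_le x 0 0 Hb Hb). lra.
Qed.

Lemma y_prop : exists t, 0 <= t /\ forall j, y j = t * x j.
Proof.
  destruct x_nonzero as [k0 Hk0]. exists (y k0 / x k0). split.
  - pose proof (real_test k0 k0 (1 / x k0) 0) as H.
    replace (1 / x k0 * x k0 + 0 * x k0) with 1 in H by (field; auto).
    replace (1 / x k0 * y k0 + 0 * y k0) with (y k0 / x k0) in H by (field; auto). lra.
  - intros j. apply Rle_antisym.
    + assert (0 <= y k0 / x k0 * x j - y j); [|lra].
      apply (eps_lemma _ (y k0 / x k0)). intros e He.
      pose proof (real_test k0 j ((e + x j) / x k0) (-1)) as H.
      replace ((e + x j) / x k0 * x k0 + -1 * x j) with e in H by (field; auto).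
      replace ((e + x j) / x k0 * y k0 + -1 * y j) with (y k0 / x k0 * x j - y j + e * (y k0 / x k0)) in H
        by (field; auto). lra.
    + assert (0 <= y j - y k0 / x k0 * x j); [|lra].
      apply (eps_lemma _ (y k0 / x k0)). intros e He.
      pose proof (real_test k0 j ((e - x j) / x k0) 1) as H.
      replace ((e - x j) / x k0 * x k0 + 1 * x j) with e in H by (field; auto).
      replace ((e - x j) / x k0 * y k0 + 1 * y j) with (y j - y k0 / x k0 * x j + e * (y k0 / x k0)) in H
        by (field; auto). lra.
Qed.

Lemma core_final : forall k, y k = x k.
Proof.
  destruct y_prop as [t [Ht Hyt]].
  set (Sx := Series (Tm u a x)). set (sx := sup_norm x).
  assert (Esx : sx = sup_norm x) by reflexivity.
  assert (Hsum : sx + Sx = 1) by (rewrite <- Hx1; reflexivity).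
  assert (Ty : forall m, Tm u a y m = t * Tm u a x m).
  { intros m. unfold Tm.
    assert (E : y = fun k => t * x k + 0 * x k) by (apply functional_extensionality; intros k; rewrite Hyt; ring).
    rewrite E, (inner_lin u a Hd). rewrite Rmult_0_l, Rplus_0_r, Rabs_mult, (Rabs_pos_eq t) by auto. ring. }
  assert (LS : is_lim_seq (fun n => Series (Tm u a (zs n))) (t * Sx)).
  { replace (t * Sx) with (Series (Tm u a y)).
    2:{ unfold Sx. rewrite <- Series_scal_l. apply Series_ext. apply Ty. }
    apply (dom_series _ _ (fun m => 1 * (/2)^m)).
    - apply geom_ex.
    - intros n m. destruct (Tm_bound u a Hd (zs n) 1 m (zb n)). rewrite Rabs_pos_eq; lra.
    - intros m. unfold Tm. apply is_lim_seq_mult'; [apply is_lim_seq_const|].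
      apply (is_lim_seq_abs _ (inner y (phi u a m))). apply beta_lim. }
  assert (LSup : is_lim_seq (fun n => sup_norm (zs n)) (1 - t * Sx)).
  { apply (is_lim_seq_ext (fun n => 1 - Series (Tm u a (zs n)))).
    - intros n. specialize (Hz1 n). rewrite read_norm_eq in Hz1. lra.
    - apply is_lim_seq_minus'; [apply is_lim_seq_const| exact LS]. }
  assert (Sx0 : 0 <= Sx) by (apply (S_bounds u a Hd x 1 xb)).
  assert (sx0 : 0 <= sx) by (apply (sup_nonneg x 1 xb)).
  assert (Tle : t <= 1).
  { destruct (Rle_or_lt t 1) as [|Hgt]; auto. exfalso.
    assert (Hj : forall j, t * Rabs (x j) <= 1 - t * Sx).
    { intros j.
      assert (Rbar_le (Rbar_abs (y j)) (1 - t * Sx)).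
      { eapply is_lim_seq_le; [| apply (is_lim_seq_abs _ _ (Hy j)) | exact LSup].
        intros n. apply (sup_ge (zs n) 1 j (zb n)). }
      simpl in H. rewrite Hyt, Rabs_mult, (Rabs_pos_eq t) in H by auto. exact H. }
    assert (sx <= (1 - t * Sx) / t).
    { apply (sup_le x 1 _ xb). intros k. apply (Rmult_le_reg_l t); [lra|].
      replace (t * ((1 - t * Sx) / t)) with (1 - t * Sx) by (field; lra). apply Hj. }
    assert (t * sx <= 1 - t * Sx).
    { replace (1 - t * Sx) with (t * ((1 - t * Sx) / t)) by (field; lra). apply Rmult_le_compat_l; lra. }
    nra. }
  assert (Tge : 1 <= t).
  { destruct x_nonzero as [k0 Hk0].
    assert (sxp : 0 < sx).
    { eapply Rlt_le_trans; [apply Rabs_pos_lt; exact Hk0| apply (sup_ge x 1 k0 xb)]. }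
    pose proof Hx as Hx'. unfold in_c0 in Hx'. rewrite lim_eps in Hx'.
    destruct (Hx' (sx / 2) ltac:(lra)) as [N0 HN0].
    set (E := fun n => sum_f_R0 (fun k => Rabs (zs n k - y k)) N0).
    assert (EL : is_lim_seq E 0).
    { unfold E. rewrite <- (zero_sum (fun _ => 0) N0) by auto.
      apply (lim_sum (fun n k => Rabs (zs n k - y k)) (fun _ => 0)). intros k.
      replace (Finite 0) with (Rbar_abs (y k - y k)) by (simpl; f_equal; rewrite Rminus_diag, Rabs_R0; auto).
      apply is_lim_seq_abs. apply is_lim_seq_minus'; [apply Hy| apply is_lim_seq_const]. }
    set (eta := fun n => / INR (S n)).
    assert (etap : forall n, 0 < eta n) by (intros; apply Rinv_0_lt_compat, lt_0_INR; lia).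
    assert (EtaL : is_lim_seq eta 0).
    { apply lim_eps. intros e He. destruct (inv_small e He) as [N HN]. exists N. intros n Hn.
      rewrite Rminus_0_r, Rabs_pos_eq by (apply Rlt_le, etap). apply HN; auto. }
    assert (dnn : forall n, 0 <= delta n).
    { intros n. pose proof (sd_le n). pose proof (sup_deficit n). lra. }
    assert (Ev : eventually (fun n => sx + sup_norm (zs n) - delta n - eta n <= (1 + t) * sx + E n)).
    { pose proof delta_lim as DL. rewrite lim_eps in DL. destruct (DL (sx/4) ltac:(lra)) as [N1 HN1].
      pose proof EtaL as EL2. rewrite lim_eps in EL2. destruct (EL2 (sx/4) ltac:(lra)) as [N2 HN2].
      exists (max N1 N2). intros n Hn.
      specialize (HN1 n ltac:(lia)). specialize (HN2 n ltac:(lia)).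
      rewrite Rminus_0_r in HN1, HN2. rewrite Rabs_pos_eq in HN1 by auto.
      rewrite Rabs_pos_eq in HN2 by (apply Rlt_le, etap).
      destruct (sup_approx (seq_add x (zs n)) 2 (eta n) (xzb n) (etap n)) as [k Hk].
      pose proof (sd_le n). change (seq_add x (zs n) k) with (x k + zs n k) in Hk.
      pose proof (sup_ge (zs n) 1 k (zb n)).
      pose proof (Rabs_triang (x k) (zs n k)).
      assert (Hkx : Rabs (x k) > sx / 2) by (lra).
      assert (HkN : (k <= N0)%nat).
      { destruct (Compare_dec.le_lt_dec k N0); auto. specialize (HN0 k ltac:(lia)). rewrite Rminus_0_r in HN0. lra. }
      assert (A1 : Rabs (x k + zs n k) <= Rabs (x k + y k) + Rabs (zs n k - y k)).
      { replace (x k + zs n k) with ((x k + y k) + (zs n k - y k)) by ring. apply Rabs_triang. }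
      assert (A2 : Rabs (x k + y k) <= (1 + t) * sx).
      { rewrite Hyt. replace (x k + t * x k) with ((1 + t) * x k) by ring.
        rewrite Rabs_mult, (Rabs_pos_eq (1 + t)) by lra. apply Rmult_le_compat_l; [lra| apply (sup_ge x 1 k xb)]. }
      assert (A3 : Rabs (zs n k - y k) <= E n).
      { unfold E. apply (sum_ge_term (fun k => Rabs (zs n k - y k))); auto. intros; apply Rabs_pos. }
      lra. }
    assert (Rbar_le (sx + (1 - t * Sx) - 0 - 0) ((1 + t) * sx + 0)).
    { eapply is_lim_seq_le_loc; [exact Ev| |].
      - apply is_lim_seq_minus'; [apply is_lim_seq_minus'; [apply is_lim_seq_plus'; [apply is_lim_seq_const| exact LSup]| apply delta_lim]| exact EtaL].
      - apply is_lim_seq_plus'; [apply is_lim_seq_const| exact EL]. }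
    simpl in H. nra. }
  intros k. rewrite Hyt. replace t with 1 by lra. ring.
Qed.

End Core.

Theorem theorem2p9 (u : nat -> seqR) (a : nat -> nat) :
  read_data u a ->
  forall x : seqR, in_c0 x -> read_norm u a x = 1 ->
  forall xs : nat -> seqR,
    (forall n, in_c0 (xs n)) ->
    (forall n, read_norm u a (xs n) = 1) ->
    is_lim_seq (fun n => read_norm u a (seq_add x (xs n))) 2 ->
    weak_conv u a xs x.
Proof.
  intros Hd x Hx Hx1 xs Hc Hn1 Hl.
  apply (weak_from_coord u a Hd); auto.
  { intros n. apply (norm1_bnd u a Hd); auto. }
  intros k0. apply lim_eps. intros e He. apply NNPP. intros Hno.
  assert (Inf : forall (i N : nat), exists n, (N <= n)%nat /\ e <= Rabs (xs n k0 - x k0)).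
  { intros _ N. apply NNPP. intros H. apply Hno. exists N. intros n Hn.
    apply Rnot_le_lt. intros H2. apply H. exists n. split; auto. }
  destruct (extract _ Inf) as [psi [Hpsi Hp]].
  destruct (diag (fun n k => xs (psi n) k) 1) as [sigma [Hs [y Hy]]].
  { intros n k. apply (norm1_bnd u a Hd); auto. }
  assert (Hcomp : incr (fun n => psi (sigma n))).
  { intros n. apply incr_mono; auto. }
  pose proof (core_final u a Hd x Hx Hx1 (fun n => xs (psi (sigma n))) (fun n => Hc _) (fun n => Hn1 _)
     (subseq_lim _ _ _ Hcomp Hl) y Hy k0) as Hyk.
  specialize (Hy k0). rewrite lim_eps in Hy. destruct (Hy e He) as [N HN].
  specialize (HN N (le_n _)). specialize (Hp (sigma N)). simpl in HN. rewrite Hyk in HN. lra.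
Qed.
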